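(* Let $\mathbb H$ be the real quaternion algebra, let $a,b,c\in\mathbb H$ be nonzero, and let $f(z)=z^2+azb+c$ be the two-sided polynomial evaluated as $f(z_0)=z_0^2+az_0b+c$. Then among the pure imaginary roots of $f$ there are at most two distinct norms; i.e. the number of pure imaginary roots of $f$ with pairwise distinct norms is at most two.
   Context: An element of $\mathbb H$ is pure imaginary if its real part is $0$; its norm is $N(q)=q\bar q$, which for pure imaginary $q$ equals $-q^2$. *)

(* Defs.v *)
From mathcomp Require Import all_boot all_order all_algebra.
From mathcomp Require Import reals.
Set Implicit Arguments. Unset Strict Implicit. Unset Printing Implicit Defensive.
Import Order.TTheory GRing.Theory Num.Theory.
Local Open Scope ring_scope.

(* The real quaternion algebra H: q = q0 + q1 i + q2 j + q3 k. *)
Record quat (R : realType) := Quat { q0 : R; q1 : R; q2 : R; q3 : R }.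

Definition qzero (R : realType) : quat R := Quat 0 0 0 0.

Definition qadd (R : realType) (x y : quat R) : quat R :=
  Quat (q0 x + q0 y) (q1 x + q1 y) (q2 x + q2 y) (q3 x + q3 y).

(* Hamilton product, i^2 = j^2 = k^2 = ijk = -1. *)
Definition qmul (R : realType) (x y : quat R) : quat R :=
  Quat (q0 x * q0 y - q1 x * q1 y - q2 x * q2 y - q3 x * q3 y)
       (q0 x * q1 y + q1 x * q0 y + q2 x * q3 y - q3 x * q2 y)
       (q0 x * q2 y - q1 x * q3 y + q2 x * q0 y + q3 x * q1 y)
       (q0 x * q3 y + q1 x * q2 y - q2 x * q1 y + q3 x * q0 y).

Definition qconj (R : realType) (x : quat R) : quat R :=
  Quat (q0 x) (- q1 x) (- q2 x) (- q3 x).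

Definition qre (R : realType) (x : quat R) : R := q0 x.
Definition pure_imag (R : realType) (x : quat R) : Prop := qre x = 0.

(* N(q) = q * conj q, a real number (we take the real part of that product). *)
Definition qnorm (R : realType) (x : quat R) : R := qre (qmul x (qconj x)).

Definition feval (R : realType) (a b c z : quat R) : quat R :=
  qadd (qadd (qmul z z) (qmul (qmul a z) b)) c.

(* Main.v *)
Require Import Defs.
From mathcomp Require Import all_boot all_order all_algebra.
From mathcomp Require Import reals.
From mathcomp Require Import ring.
Import GRing.Theory Num.Theory.
Local Open Scope ring_scope.

Lemma normM (R : realType) (x y : quat R) :
  qnorm (qmul x y) = qnorm x * qnorm y.
Proof. case: x => ????; case: y => ????; rewrite /qnorm /qmul /qconj /qre /=; ring. Qed.

Lemma key (R : realType) (a b c z : quat R) :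
  pure_imag z -> feval a b c z = qzero R ->
  qnorm z ^+ 2 - (2 * q0 c + qnorm a * qnorm b) * qnorm z + qnorm c = 0.
Proof.
move=> hz; rewrite /feval.
have hw := normM _ (qmul a z) b; rewrite [qnorm (qmul a z)]normM in hw.
move: hw; move: (qmul (qmul a z) b) => w hw.
case: z hz hw => z0 z1 z2 z3; rewrite /pure_imag /qre /= => -> hw.
case: w hw => w0 w1 w2 w3 hw.
case: c => c0 c1 c2 c3.
rewrite /qadd /qmul /qzero /= => -[e0 e1 e2 e3].
have E0 : w0 = (z1*z1 + z2*z2 + z3*z3) - c0 by apply/eqP; rewrite -subr_eq0; apply/eqP; rewrite -e0; ring.
have E1 : w1 = - c1 by apply/eqP; rewrite -subr_eq0; apply/eqP; rewrite -e1; ring.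
have E2 : w2 = - c2 by apply/eqP; rewrite -subr_eq0; apply/eqP; rewrite -e2; ring.
have E3 : w3 = - c3 by apply/eqP; rewrite -subr_eq0; apply/eqP; rewrite -e3; ring.
move: hw; rewrite E0 E1 E2 E3 => hw.
have D : (qnorm (Quat (z1 * z1 + z2 * z2 + z3 * z3 - c0) (- c1) (- c2) (- c3))
   - qnorm a * qnorm (Quat 0 z1 z2 z3) * qnorm b) = 0 by rewrite hw subrr.
apply: (etrans _ D).
rewrite /qnorm /qconj /qre /=; ring.
Qed.

Lemma three_roots (R : realType) (B C x y z : R) :
  x ^+ 2 - B * x + C = 0 -> y ^+ 2 - B * y + C = 0 -> z ^+ 2 - B * z + C = 0 ->
  x != y -> x != z -> y != z -> False.
Proof.
move=> hx hy hz nxy nxz nyz.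
have H1 : (x - y) * (x + y - B) = 0 by rewrite -(subrr 0) -{1}hx -hy; ring.
have H2 : (x - z) * (x + z - B) = 0 by rewrite -(subrr 0) -{1}hx -hz; ring.
move/eqP: H1; rewrite mulf_eq0 subr_eq0 (negbTE nxy) /= => /eqP H1.
move/eqP: H2; rewrite mulf_eq0 subr_eq0 (negbTE nxz) /= => /eqP H2.
have : y - z = 0 by rewrite -(subrr 0) -{1}H1 -H2; ring.
by move/eqP; rewrite subr_eq0 (negbTE nyz).
Qed.

Theorem mainTheorem20 (R : realType) (a b c : quat R) :
  a <> qzero R -> b <> qzero R -> c <> qzero R ->
  forall s : seq (quat R),
    (forall i, (i < size s)%N ->
       pure_imag (nth (qzero R) s i) /\ feval a b c (nth (qzero R) s i) = qzero R) ->
    uniq (map (@qnorm R) s) ->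
    (size s <= 2)%N.
Proof.
move=> _ _ _ [|x [|y [|z s]]] //= H.
have [px fx] := H 0%N isT.
have [py fy] := H 1%N isT.
have [pz fz] := H 2%N isT.
rewrite !inE !negb_or => /and4P [/andP [nxy /andP [nxz _]] /andP [nyz _] _ _].
exfalso; move: px fx py fy pz fz => /= px fx py fy pz fz.
exact: (three_roots _ _ _ _ _ _ (key _ _ _ _ _ px fx) (key _ _ _ _ _ py fy) (key _ _ _ _ _ pz fz) nxy nxz nyz).
Qed.
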